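(* Let $N_1,N_2,N_3,L_1,L_2,L_3\ge1$ be dyadic, let $A\ge2^{25}$ be dyadic and let $j_1,j_2\in\{0,\dots,A-1\}$ with $|j_1-j_2|\le32$. Let $\lambda_\iota=(\tau_\iota,\xi_\iota,\eta_\iota)\in G_{N_\iota,L_\iota}\cap\tilde{\mathcal D}^A_{j_\iota}$ for $\iota=1,2$, with $\lambda_1+\lambda_2\in G_{N_3,L_3}$, and set $(\xi_3,\eta_3)=-(\xi_1+\xi_2,\eta_1+\eta_2)$. Assume $((\xi_1,\eta_1),(\xi_2,\eta_2))\notin\mathcal I_1$, and assume Case 1.1: $N_1\sim N_2\gg N_3$ and $|\xi_1|\sim|\eta_1|\sim|\xi_2|\sim|\eta_2|\sim N_1\gg|\xi_3|\sim|\eta_3|$. If $\max_{1\le\iota\le3}L_\iota\lesssim A^{-1}N_1^3$, then $N_3\lesssim A^{-1}N_1$.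
   Context: $G_{N,L}=\{(\tau,\xi,\eta):N/2<|(\xi,\eta)|<2N,\ L/2<|\tau-\xi^3-\eta^3|<2L\}$. Angular sectors: for dyadic $A$ and $j\in\{0,\dots,A-1\}$, $\Theta^A_j=[\frac{\pi}{A}(j-2),\frac\pi A(j+2)]\cup[-\pi+\frac\pi A(j-2),-\pi+\frac\pi A(j+2)]$, $\mathcal D^A_j=\{r(\cos\theta,\sin\theta):r\ge0,\ \theta\in\Theta^A_j\}\subset\mathbb{R}^2$, $\tilde{\mathcal D}^A_j=\mathbb{R}\times\mathcal D^A_j$. $\mathcal I_1=\mathcal D^{2^{11}}_{3\cdot2^9}\times\mathcal D^{2^{11}}_{3\cdot 2^9}\subset\mathbb{R}^2\times\mathbb{R}^2$, i.e. both vectors lie within angle $\pi/2^{10}$ of the line $\xi+\eta=0$. $A\lesssim B$ means $A\le CB$ with an absolute constant; $A\gg B$ means $A\ge CB$ for a sufficiently large absolute constant; $\sim$ means comparable with fixed absolute constants. *)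

(* Defs.v *)
From Stdlib Require Import Reals Lra.
Open Scope R_scope.

Definition dyadic (x : R) : Prop := exists k : nat, x = 2 ^ k.

Definition inTheta (A j th : R) : Prop :=
  (PI / A * (j - 2) <= th <= PI / A * (j + 2)) \/
  (- PI + PI / A * (j - 2) <= th <= - PI + PI / A * (j + 2)).

Definition inD (A j x y : R) : Prop :=
  exists r th, 0 <= r /\ inTheta A j th /\ x = r * cos th /\ y = r * sin th.

Definition inDt (A j tau xi eta : R) : Prop := inD A j xi eta.

Definition inG (N L tau xi eta : R) : Prop :=
  N / 2 < sqrt (xi ^ 2 + eta ^ 2) < 2 * N /\
  L / 2 < Rabs (tau - xi ^ 3 - eta ^ 3) < 2 * L.

Definition inI1 (x1 y1 x2 y2 : R) : Prop :=
  inD (2 ^ 11) (3 * 2 ^ 9) x1 y1 /\ inD (2 ^ 11) (3 * 2 ^ 9) x2 y2.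

Definition sim (c a b : R) : Prop := a <= c * b /\ b <= c * a.

(* Main.v *)
From Stdlib Require Import Reals Lra Ratan Classical Lia.
Require Import Defs.
Open Scope R_scope.

Lemma sin_abs_le x : Rabs (sin x) <= Rabs x.
Proof.
  assert (Hp : forall y, 0 <= y -> Rabs (sin y) <= y).
  { intros y Hy. destruct (Req_dec y 0) as [->|Hn]. rewrite sin_0, Rabs_R0; lra.
    pose proof (sin_lt_x y ltac:(lra)). pose proof (SIN_bound y).
    destruct (Rle_lt_dec y 1).
    - assert (0 <= sin y) by (apply sin_ge_0; pose proof PI2_3_2; lra).
      rewrite Rabs_pos_eq; lra.
    - apply Rabs_le; lra. }
  destruct (Rle_lt_dec 0 x).
  - rewrite (Rabs_pos_eq x) by lra. auto.
  - rewrite <- (Ropp_involutive x), sin_neg, Rabs_Ropp, Rabs_Ropp.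
    rewrite (Rabs_pos_eq (-x)) by lra. apply Hp; lra.
Qed.

Lemma abs_le_inv x a : Rabs x <= a -> - a <= x <= a.
Proof. unfold Rabs; destruct (Rcase_abs x); intros; lra. Qed.

Lemma sin_small_lb : 3/2048 <= sin (PI/1024).
Proof.
  pose proof PI_4. pose proof PI2_3_2.
  destruct (sin_bound (PI/1024) 0) as [Hs _]; try lra.
  unfold sin_approx, sin_term in Hs. simpl in Hs. nra.
Qed.

Lemma sector_sin A ja jb tha thb : 0 < A -> Rabs (ja - jb) <= 32 ->
  inTheta A ja tha -> inTheta A jb thb -> Rabs (sin (thb - tha)) <= 36 * (PI / A).
Proof.
  intros HA Hj Ha Hb. set (w := PI / A) in *.
  assert (Hw : 0 < w) by (unfold w; apply Rdiv_lt_0_compat; [exact PI_RGT_0|lra]).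
  apply abs_le_inv in Hj.
  assert (E1 : w * (jb - ja) <= 32 * w) by nra.
  assert (E2 : - (32 * w) <= w * (jb - ja)) by nra.
  unfold inTheta in Ha, Hb. fold w in Ha, Hb.
  destruct Ha as [Ha|Ha]; destruct Hb as [Hb|Hb].
  - eapply Rle_trans; [apply sin_abs_le|]. apply Rabs_le; nra.
  - rewrite <- (Rabs_Ropp (sin _)), <- neg_sin.
    eapply Rle_trans; [apply sin_abs_le|]. apply Rabs_le; nra.
  - replace (thb - tha) with ((thb - tha - PI) + PI) by ring.
    rewrite neg_sin, Rabs_Ropp.
    eapply Rle_trans; [apply sin_abs_le|]. apply Rabs_le; nra.
  - eapply Rle_trans; [apply sin_abs_le|]. apply Rabs_le; nra.
Qed.

Lemma sinA y : PI/1024 <= y <= PI - PI/1024 -> 3/2048 <= sin y.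
Proof.
  intros Hy. pose proof sin_small_lb. pose proof PI_RGT_0.
  destruct (Rle_lt_dec y (PI/2)).
  - eapply Rle_trans; [exact H|]. apply sin_incr_1; lra.
  - rewrite <- sin_PI_x. eapply Rle_trans; [exact H|]. apply sin_incr_1; lra.
Qed.

Lemma cs_lower A ja th : 64 <= A -> 0 <= ja < A -> inTheta A ja th ->
  ~ inTheta (2 ^ 11) (3 * 2 ^ 9) th -> 3/2048 <= Rabs (cos th + sin th).
Proof.
  intros HA Hj Ht Hn.
  replace (2 ^ 11) with 2048 in Hn by ring.
  replace (3 * 2 ^ 9) with 1536 in Hn by ring.
  unfold inTheta in Ht, Hn. set (w := PI / A) in *.
  pose proof PI_RGT_0.
  assert (Hw : 0 < w) by (unfold w; apply Rdiv_lt_0_compat; lra).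
  assert (Hw2 : w * 64 <= PI) by (unfold w; apply (Rmult_le_reg_r (/64)); [lra|];
     field_simplify; [ | lra]; apply Rmult_le_reg_r with A; [lra|]; field_simplify; nra).
  assert (Hja : w * ja <= PI) by (unfold w; apply Rmult_le_reg_r with A; [lra|];
     field_simplify; [nra|lra]).
  assert (0 <= w * ja) by nra.
  assert (Hr : - PI - PI/32 <= th <= PI + PI/32) by (destruct Ht; nra).
  assert (Hx : 3/2048 <= Rabs (sin (th + PI/4))).
  { set (x := th + PI/4).
    assert (~ (PI/1024 * -1 <= x <= PI/1024)).
    { intro. apply Hn. right. unfold x in *. split; lra. }
    assert (~ (PI - PI/1024 <= x <= PI + PI/1024)).
    { intro. apply Hn. left. unfold x in *. split; lra. }
    destruct (Rle_lt_dec x (PI/1024)) as [h1|h1].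
    - assert (x < - (PI/1024)) by lra.
      rewrite <- (Ropp_involutive x), sin_neg, Rabs_Ropp.
      rewrite Rabs_pos_eq; apply sinA || (pose proof (sinA (-x))); unfold x in *; lra.
    - destruct (Rle_lt_dec x (PI - PI/1024)) as [h2|h2].
      + rewrite Rabs_pos_eq; pose proof (sinA x); lra.
      + assert (x > PI + PI/1024) by lra.
        replace x with ((x - PI) + PI) by ring. rewrite neg_sin, Rabs_Ropp.
        rewrite Rabs_pos_eq; pose proof (sinA (x - PI)); unfold x in *; lra. }
  rewrite sin_plus, sin_PI4, cos_PI4 in Hx.
  assert (Hs : 1 < sqrt 2).
  { rewrite <- sqrt_1 at 1. apply sqrt_lt_1; lra. }
  assert (Hs0 : 0 < sqrt 2) by lra.
  set (y := sin th * (1 / sqrt 2) + cos th * (1 / sqrt 2)) in Hx.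
  assert (Ey : cos th + sin th = sqrt 2 * y) by (unfold y; field; lra).
  rewrite Ey, Rabs_mult, (Rabs_pos_eq (sqrt 2)) by lra.
  pose proof (Rabs_pos y). nra.
Qed.

Lemma cube_lower A ja th : 64 <= A -> 0 <= ja < A -> inTheta A ja th ->
  ~ inTheta (2 ^ 11) (3 * 2 ^ 9) th -> 3/4096 <= Rabs (cos th ^ 3 + sin th ^ 3).
Proof.
  intros HA Hj Ht Hn. pose proof (cs_lower A ja th HA Hj Ht Hn) as H1.
  pose proof (sin2_cos2 th) as Hcs. unfold Rsqr in Hcs.
  set (c := cos th) in *. set (s := sin th) in *.
  replace (c ^ 3 + s ^ 3) with ((c + s) * (1 - c * s)) by (rewrite <- Hcs; ring).
  rewrite Rabs_mult.
  assert (h : 1/2 <= 1 - c * s) by (pose proof (pow2_ge_0 (c - s)); nra).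
  rewrite (Rabs_pos_eq (1 - c*s)) by lra.
  pose proof (Rabs_pos (c + s)). nra.
Qed.

Lemma key A ja jb ra tha rb thb Xa Ya Xb Yb X3 Y3 :
  64 <= A -> 0 <= ja < A -> Rabs (ja - jb) <= 32 ->
  inTheta A ja tha -> inTheta A jb thb -> ~ inTheta (2 ^ 11) (3 * 2 ^ 9) tha ->
  0 <= ra -> 0 <= rb -> Xa = ra * cos tha -> Ya = ra * sin tha ->
  Xb = rb * cos thb -> Yb = rb * sin thb -> X3 = - (Xa + Xb) -> Y3 = - (Ya + Yb) ->
  ra ^ 2 * ((3/4096) * sqrt (X3 ^ 2 + Y3 ^ 2) - (3/4096 + 2) * (rb * (36 * (PI / A))))
    - ra * (X3 ^ 2 + Y3 ^ 2) <= Rabs (Xa * Xb * X3 + Ya * Yb * Y3).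
Proof.
  intros HA Hj Hjj Ha Hb Hn Hra Hrb HXa HYa HXb HYb HX3 HY3.
  pose proof (cube_lower A ja tha HA Hj Ha Hn) as Hcube.
  assert (HAp : 0 < A) by lra.
  pose proof (sector_sin A ja jb tha thb HAp Hjj Ha Hb) as Hsec.
  pose proof (sin2_cos2 tha) as Hcs. unfold Rsqr in Hcs.
  pose proof (SIN_bound tha). pose proof (COS_bound tha).
  set (w := PI / A) in *.
  set (c := cos tha) in *. set (s := sin tha) in *.
  set (d := c * X3 + s * Y3). set (p := c * Y3 - s * X3).
  set (t := sqrt (X3 ^ 2 + Y3 ^ 2)).
  assert (Ht0 : 0 <= t) by apply sqrt_pos.
  assert (Ht2 : t * t = X3 ^ 2 + Y3 ^ 2) by (apply sqrt_sqrt; nra).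
  assert (Hp : p = - (rb * sin (thb - tha))).
  { unfold p. rewrite sin_minus. fold c s. rewrite HX3, HY3, HXa, HYa, HXb, HYb. ring. }
  assert (Hpb : Rabs p <= rb * (36 * w)).
  { rewrite Hp, Rabs_Ropp, Rabs_mult, (Rabs_pos_eq rb) by lra.
    apply Rmult_le_compat_l; lra. }
  assert (Hdp : d * d + p * p = t * t).
  { rewrite Ht2. unfold d, p. replace (X3 ^ 2 + Y3 ^ 2) with ((s*s + c*c) * (X3 ^ 2 + Y3 ^ 2)) by (rewrite Hcs; ring). ring. }
  assert (Hd : t - Rabs p <= Rabs d).
  { pose proof (Rabs_pos p). pose proof (Rabs_pos d).
    assert (Rabs d * Rabs d = d * d) by (rewrite <- Rabs_mult; apply Rabs_pos_eq; nra).
    assert (Rabs p * Rabs p = p * p) by (rewrite <- Rabs_mult; apply Rabs_pos_eq; nra).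
    nra. }
  assert (E0 : d * (c ^ 3 + s ^ 3) + p * (c * s * (s - c)) = c ^ 2 * X3 + s ^ 2 * Y3).
  { transitivity ((s*s + c*c) * (c ^ 2 * X3 + s ^ 2 * Y3)); [unfold d, p; ring|]. rewrite Hcs; ring. }
  assert (EQ : Xa * Xb * X3 + Ya * Yb * Y3 =
     - (ra ^ 2 * (d * (c ^ 3 + s ^ 3) + p * (c * s * (s - c)))) - (Xa * X3 ^ 2 + Ya * Y3 ^ 2)).
  { rewrite E0. replace Xb with (- X3 - Xa) by lra. replace Yb with (- Y3 - Ya) by lra.
    rewrite HXa, HYa. ring. }
  assert (Hcsb : Rabs (c * s * (s - c)) <= 2).
  { rewrite !Rabs_mult. pose proof (Rabs_pos c). pose proof (Rabs_pos s).
    assert (Rabs c <= 1) by (apply Rabs_le; lra). assert (Rabs s <= 1) by (apply Rabs_le; lra).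
    assert (Rabs (s - c) <= 2) by (apply Rabs_le; lra). pose proof (Rabs_pos (s - c)).
    assert (Rabs c * Rabs s <= 1) by nra. nra. }
  assert (Hrest : Rabs (Xa * X3 ^ 2 + Ya * Y3 ^ 2) <= ra * (X3 ^ 2 + Y3 ^ 2)).
  { eapply Rle_trans; [apply Rabs_triang|]. rewrite !Rabs_mult.
    rewrite (Rabs_pos_eq (X3 ^ 2)) by nra. rewrite (Rabs_pos_eq (Y3 ^ 2)) by nra.
    assert (Rabs Xa <= ra) by (rewrite HXa, Rabs_mult, Rabs_pos_eq by lra; assert (Rabs c <= 1) by (apply Rabs_le; lra); nra).
    assert (Rabs Ya <= ra) by (rewrite HYa, Rabs_mult, Rabs_pos_eq by lra; assert (Rabs s <= 1) by (apply Rabs_le; lra); nra).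
    nra. }
  assert (Hmain : ra ^ 2 * (Rabs d * (3/4096) - Rabs p * 2) <=
                  Rabs (ra ^ 2 * (d * (c ^ 3 + s ^ 3) + p * (c * s * (s - c))))).
  { rewrite Rabs_mult, (Rabs_pos_eq (ra ^ 2)) by nra.
    apply Rmult_le_compat_l; [nra|].
    pose proof (Rabs_triang_inv (d * (c ^ 3 + s ^ 3)) (- (p * (c * s * (s - c))))) as T.
    replace (d * (c ^ 3 + s ^ 3) - - (p * (c * s * (s - c)))) with (d * (c ^ 3 + s ^ 3) + p * (c * s * (s - c))) in T by ring.
    rewrite Rabs_Ropp, (Rabs_mult d), (Rabs_mult p) in T.
    pose proof (Rabs_pos d). pose proof (Rabs_pos p).
    assert (Rabs d * (3/4096) <= Rabs d * Rabs (c ^ 3 + s ^ 3)) by (apply Rmult_le_compat_l; lra).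
    assert (Rabs p * Rabs (c * s * (s - c)) <= Rabs p * 2) by (apply Rmult_le_compat_l; lra).
    lra. }
  rewrite EQ.
  pose proof (Rabs_triang_inv (- (ra ^ 2 * (d * (c ^ 3 + s ^ 3) + p * (c * s * (s - c))))) (Xa * X3 ^ 2 + Ya * Y3 ^ 2)) as T.
  rewrite Rabs_Ropp in T.
  assert (ra ^ 2 * ((3/4096) * t - (3/4096 + 2) * (rb * (36 * w))) <= ra ^ 2 * (Rabs d * (3/4096) - Rabs p * 2)).
  { apply Rmult_le_compat_l; [nra|]. pose proof (Rabs_pos p). nra. }
  lra.
Qed.
Lemma final c C IA N1 N3 ra t P Q :
  1 <= c -> 0 < C -> 0 < IA -> 0 < N1 -> 0 < N3 -> 0 < ra ->
  N1 <= 2 * c * ra -> N3 / 2 < t < 2 * N3 -> (32 * c * 4096 / 3) * N3 <= N1 ->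
  0 <= P -> P <= 288 * c * N1 * IA ->
  ra ^ 2 * ((3/4096) * t - (3/4096 + 2) * P) - ra * (t * t) <= Q ->
  Q < 2 * (C * IA * N1 ^ 3) ->
  N3 <= (16384 / 3) * (8 * c ^ 2 * C + 864 * c) * IA * N1.
Proof.
  intros Hc HC HIA HN1 HN3 Hra H1 Ht HK HP0 HP HQ1 HQ2.
  set (d := 3/4096) in *.
  assert (a1 : N3 * 16 / d <= ra).
  { apply Rmult_le_reg_l with (2 * c); [lra|]. unfold d in *. lra. }
  assert (a2 : t * t <= 4 * N3 * N3) by nra.
  assert (a3 : ra * (t * t) <= ra * ra * N3 * d / 4).
  { assert (ra * (t*t) <= ra * (4 * N3 * N3)) by (apply Rmult_le_compat_l; lra).
    assert (N3 <= ra * d / 16) by (unfold d in *; lra).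
    assert (ra * (4 * N3 * N3) <= ra * (4 * N3 * (ra * d / 16))).
    { apply Rmult_le_compat_l; [lra|]. apply Rmult_le_compat_l; lra. }
    unfold d in *. nra. }
  assert (a4 : ra ^ 2 * (d * N3 / 2) <= ra ^ 2 * (d * t)).
  { apply Rmult_le_compat_l; [nra|]. unfold d; lra. }
  set (X := d * N3 / 4 - (d + 2) * P).
  assert (a5 : ra ^ 2 * X < 2 * (C * IA * N1 ^ 3)).
  { unfold X. assert (ra ^ 2 * (d * N3 / 4 - (d + 2) * P) <= Q).
    { replace (ra ^ 2 * (d * N3 / 4 - (d + 2) * P)) with
        (ra ^ 2 * (d * N3 / 2) - ra * ra * N3 * d / 4 - ra ^ 2 * ((d + 2) * P)) by field.
      assert (ra ^ 2 * (d * t - (d + 2) * P) = ra ^ 2 * (d * t) - ra ^ 2 * ((d+2) * P)) by ring.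
      lra. }
    lra. }
  assert (HPb : (d + 2) * P <= 864 * c * N1 * IA) by (unfold d in *; nra).
  assert (HX : X <= 8 * c ^ 2 * C * IA * N1).
  { destruct (Rle_lt_dec X 0) as [h|h].
    - assert (0 <= 8 * c ^ 2 * C * IA * N1).
      { repeat apply Rmult_le_pos; nra. }
      lra.
    - assert (r2 : N1 * N1 <= 4 * c ^ 2 * (ra ^ 2)) by nra.
      assert (N1 * N1 * X <= 4 * c ^ 2 * (ra ^ 2) * X) by (apply Rmult_le_compat_r; lra).
      assert (N1 * N1 * X < N1 * N1 * (8 * c ^ 2 * C * IA * N1)).
      { assert (4 * c ^ 2 * (ra ^ 2 * X) < 4 * c ^ 2 * (2 * (C * IA * N1 ^ 3))).
        { apply Rmult_lt_compat_l; nra. }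
        nra. }
      apply Rlt_le. apply Rmult_lt_reg_l with (N1 * N1); nra. }
  unfold X, d in *. nra.
Qed.

Lemma dyadic_ge1 N : dyadic N -> 1 <= N.
Proof. intros [k ->]. induction k; simpl; lra. Qed.

Lemma modbound N1 N2 N3 L1 L2 L3 B tau1 xi1 eta1 tau2 xi2 eta2 :
  inG N1 L1 tau1 xi1 eta1 -> inG N2 L2 tau2 xi2 eta2 ->
  inG N3 L3 (tau1 + tau2) (xi1 + xi2) (eta1 + eta2) ->
  Rmax L1 (Rmax L2 L3) <= B ->
  Rabs (xi1 * xi2 * (- (xi1 + xi2)) + eta1 * eta2 * (- (eta1 + eta2))) < 2 * B.
Proof.
  intros [_ [_ h1]] [_ [_ h2]] [_ [_ h3]] HB.
  pose proof (Rmax_l L1 (Rmax L2 L3)). pose proof (Rmax_r L1 (Rmax L2 L3)).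
  pose proof (Rmax_l L2 L3). pose proof (Rmax_r L2 L3).
  set (m1 := tau1 - xi1 ^ 3 - eta1 ^ 3) in *.
  set (m2 := tau2 - xi2 ^ 3 - eta2 ^ 3) in *.
  set (m3 := tau1 + tau2 - (xi1 + xi2) ^ 3 - (eta1 + eta2) ^ 3) in *.
  replace (xi1 * xi2 * (- (xi1 + xi2)) + eta1 * eta2 * (- (eta1 + eta2)))
    with (- (m1 + (m2 + - m3)) / 3) by (unfold m1, m2, m3; field).
  unfold Rdiv. rewrite Rabs_mult, Rabs_Ropp, (Rabs_pos_eq (/3)) by lra.
  pose proof (Rabs_triang m1 (m2 + - m3)). pose proof (Rabs_triang m2 (- m3)).
  rewrite Rabs_Ropp in *. lra.
Qed.

Lemma polar r th x y : 0 <= r -> x = r * cos th -> y = r * sin th -> sqrt (x ^ 2 + y ^ 2) = r.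
Proof.
  intros Hr -> ->. pose proof (sin2_cos2 th) as H. unfold Rsqr in H.
  replace ((r * cos th) ^ 2 + (r * sin th) ^ 2) with (r ^ 2 * (sin th * sin th + cos th * cos th)) by ring.
  rewrite H, Rmult_1_r. apply sqrt_pow2; lra.
Qed.

Theorem lemma6p1 :
  forall c : R, 1 <= c ->
  exists K : R, 0 < K /\
  forall C : R, 0 < C ->
  exists C' : R, 0 < C' /\
  forall (N1 N2 N3 L1 L2 L3 A : R) (a j1 j2 : nat)
         (tau1 xi1 eta1 tau2 xi2 eta2 xi3 eta3 : R),
    dyadic N1 -> dyadic N2 -> dyadic N3 ->
    dyadic L1 -> dyadic L2 -> dyadic L3 ->
    A = 2 ^ a -> (25 <= a)%nat ->
    INR j1 < A -> INR j2 < A ->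
    Rabs (INR j1 - INR j2) <= 32 ->
    inG N1 L1 tau1 xi1 eta1 -> inDt A (INR j1) tau1 xi1 eta1 ->
    inG N2 L2 tau2 xi2 eta2 -> inDt A (INR j2) tau2 xi2 eta2 ->
    inG N3 L3 (tau1 + tau2) (xi1 + xi2) (eta1 + eta2) ->
    xi3 = - (xi1 + xi2) -> eta3 = - (eta1 + eta2) ->
    ~ inI1 xi1 eta1 xi2 eta2 ->
    (* Case 1.1 *)
    sim c N1 N2 -> N1 >= K * N3 -> N2 >= K * N3 ->
    sim c (Rabs xi1) N1 -> sim c (Rabs eta1) N1 ->
    sim c (Rabs xi2) N1 -> sim c (Rabs eta2) N1 ->
    N1 >= K * Rabs xi3 -> N1 >= K * Rabs eta3 ->
    sim c (Rabs xi3) (Rabs eta3) ->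
    Rmax L1 (Rmax L2 L3) <= C * (/ A) * N1 ^ 3 ->
    N3 <= C' * (/ A) * N1.
Proof.
  intros c Hc. exists (32 * c * 4096 / 3). split; [lra|].
  intros C HC. exists ((16384 / 3) * (8 * c ^ 2 * C + 864 * c)). split.
  { assert (0 < c ^ 2 * C) by (apply Rmult_lt_0_compat; [apply pow_lt|]; lra). lra. }
  intros N1 N2 N3 L1 L2 L3 A a j1 j2 tau1 xi1 eta1 tau2 xi2 eta2 xi3 eta3
    dN1 dN2 dN3 dL1 dL2 dL3 HA Ha Hj1 Hj2 Hjj G1 D1 G2 D2 G3 Hx3 Hy3 HnI
    [S1 S2] K1 K2 _ _ _ _ _ _ _ HL.
  apply dyadic_ge1 in dN1. apply dyadic_ge1 in dN2. apply dyadic_ge1 in dN3.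
  assert (HcN1 : N1 <= c * N1) by nra.
  assert (HA64 : 64 <= A).
  { rewrite HA. replace 64 with (2 ^ 6) by ring. apply Rle_pow; [lra|lia]. }
  assert (HIA : 0 < / A) by (apply Rinv_0_lt_compat; lra).
  pose proof (pos_INR j1). pose proof (pos_INR j2).
  destruct D1 as [r1 [th1 [Hr1 [Ht1 [Hxa Hya]]]]].
  destruct D2 as [r2 [th2 [Hr2 [Ht2 [Hxb Hyb]]]]].
  pose proof (modbound _ _ _ _ _ _ _ _ _ _ _ _ _ G1 G2 G3 HL) as HQ.
  rewrite <- Hx3, <- Hy3 in HQ.
  destruct G1 as [[g1a g1b] _]. destruct G2 as [[g2a g2b] _]. destruct G3 as [[g3a g3b] _].
  rewrite (polar r1 th1) in g1a, g1b by auto.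
  rewrite (polar r2 th2) in g2a, g2b by auto.
  replace ((xi1 + xi2) ^ 2 + (eta1 + eta2) ^ 2) with (xi3 ^ 2 + eta3 ^ 2) in g3a, g3b
    by (rewrite Hx3, Hy3; ring).
  assert (Htt : sqrt (xi3 ^ 2 + eta3 ^ 2) * sqrt (xi3 ^ 2 + eta3 ^ 2) = xi3 ^ 2 + eta3 ^ 2)
    by (apply sqrt_sqrt; nra).
  assert (HPI : 36 * (PI / A) <= 144 * / A).
  { pose proof PI_4. unfold Rdiv. apply Rmult_le_reg_r with A; [lra|].
    rewrite !Rmult_assoc, Rinv_l by lra. lra. }
  assert (Hsym : Rabs (INR j2 - INR j1) <= 32) by (rewrite Rabs_minus_sym; auto).
  destruct (classic (inTheta (2 ^ 11) (3 * 2 ^ 9) th1)) as [T1|T1].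
  -
    assert (T2 : ~ inTheta (2 ^ 11) (3 * 2 ^ 9) th2).
    { intro T2. apply HnI. split; [exists r1, th1 | exists r2, th2]; auto. }
    pose proof (key A (INR j2) (INR j1) r2 th2 r1 th1 xi2 eta2 xi1 eta1 xi3 eta3
                  HA64 ltac:(lra) Hsym Ht2 Ht1 T2 Hr2 Hr1 Hxb Hyb Hxa Hya ltac:(lra) ltac:(lra)) as Hk.
    replace (r2 * (xi3 ^ 2 + eta3 ^ 2)) with (r2 * (sqrt (xi3 ^ 2 + eta3 ^ 2) * sqrt (xi3 ^ 2 + eta3 ^ 2))) in Hk by (rewrite Htt; ring).
    replace (xi2 * xi1 * xi3 + eta2 * eta1 * eta3) with (xi1 * xi2 * xi3 + eta1 * eta2 * eta3) in Hk by ring.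
    pose proof PI_RGT_0. assert (0 < PI / A) by (apply Rdiv_lt_0_compat; lra).
    assert (P0 : 0 <= r1 * (36 * (PI / A))) by (apply Rmult_le_pos; lra).
    assert (r1 * (36 * (PI / A)) <= r1 * (144 * / A)) by (apply Rmult_le_compat_l; lra).
    assert (r1 * (144 * / A) <= (2 * c * N1) * (144 * / A)) by (apply Rmult_le_compat_r; lra).
    assert (N1 <= 2 * c * r2) by nra.
    apply (final c C (/ A) N1 N3 r2 (sqrt (xi3 ^ 2 + eta3 ^ 2)) (r1 * (36 * (PI / A)))
             (Rabs (xi1 * xi2 * xi3 + eta1 * eta2 * eta3))); lra.
  - pose proof (key A (INR j1) (INR j2) r1 th1 r2 th2 xi1 eta1 xi2 eta2 xi3 eta3
                  HA64 ltac:(lra) Hjj Ht1 Ht2 T1 Hr1 Hr2 Hxa Hya Hxb Hyb ltac:(lra) ltac:(lra)) as Hk.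
    replace (r1 * (xi3 ^ 2 + eta3 ^ 2)) with (r1 * (sqrt (xi3 ^ 2 + eta3 ^ 2) * sqrt (xi3 ^ 2 + eta3 ^ 2))) in Hk by (rewrite Htt; ring).
    pose proof PI_RGT_0. assert (0 < PI / A) by (apply Rdiv_lt_0_compat; lra).
    assert (P0 : 0 <= r2 * (36 * (PI / A))) by (apply Rmult_le_pos; lra).
    assert (r2 * (36 * (PI / A)) <= r2 * (144 * / A)) by (apply Rmult_le_compat_l; lra).
    assert (r2 * (144 * / A) <= (2 * c * N1) * (144 * / A)) by (apply Rmult_le_compat_r; lra).
    assert (N1 <= 2 * c * r1) by nra.
    apply (final c C (/ A) N1 N3 r1 (sqrt (xi3 ^ 2 + eta3 ^ 2)) (r2 * (36 * (PI / A)))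
             (Rabs (xi1 * xi2 * xi3 + eta1 * eta2 * eta3))); lra.
Qed.
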